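(* (1) Every $a\in\mathbb{S}_1\setminus F$, viewed as a linear operator on $K[x]$, has finite-dimensional kernel and cokernel, and $\mathrm{ind}(a)=-\deg_x(\bar a)$, where $\bar a$ is the image of $a$ in $\mathbb{S}_1/F\simeq K[x,x^{-1}]$. (2) $\mathrm{ind}(\sigma(a))=\mathrm{ind}(a)$ for all $\sigma\in\mathrm{Aut}_{K\text{-alg}}(\mathbb{S}_1)$ and all $a\in\mathbb{S}_1\setminus F$.
   Context: $K$ is a field of characteristic zero. $\mathbb{S}_1=K\langle x,y\mid yx=1\rangle$ acts faithfully on $P_1=K[x]$ by $x*x^i=x^{i+1}$, $y*x^i=x^{i-1}$ ($i\ge1$), $y*1=0$; we regard $\mathbb{S}_1\subset\mathrm{End}_K(K[x])$. $E_{ij}:=x^iy^j-x^{i+1}y^{j+1}$ and $F=\bigoplus_{i,j\in\mathbb{N}}KE_{ij}$ is an ideal with $\mathbb{S}_1/F\simeq K[x,x^{-1}]$ via $x\mapsto x$, $y\mapsto x^{-1}$. For a nonzero Laurent polynomial $u=\sum_{i=s}^d\lambda_ix^i$ with $\lambda_d\ne0$, $\deg_x(u):=d$. For a linear map $\varphi$ with finite-dimensional kernel and cokernel, $\mathrm{ind}(\varphi):=\dim\ker\varphi-\dim\mathrm{coker}\,\varphi$. *)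

(* Defs.v *)
From HB Require Import structures.
From mathcomp Require Import all_boot all_order all_algebra.
Set Implicit Arguments. Unset Strict Implicit. Unset Printing Implicit Defensive.
Import Order.TTheory GRing.Theory Num.Theory.
Local Open Scope ring_scope.

Section Jacobson.
Variable K : fieldType.

(* K-linear endomorphisms of K[x] are represented as plain functions. *)
Definition op := {poly K} -> {poly K}.

(* the generators of S_1 acting on K[x]: x * x^i = x^(i+1), y * x^i = x^(i-1), y * 1 = 0 *)
Definition Xop : op := fun p => 'X * p.
Definition Yop : op := fun p => \poly_(i < size p) p`_i.+1.

Definition opadd (a b : op) : op := fun p => a p + b p.
Definition opsub (a b : op) : op := fun p => a p - b p.
Definition opscale (k : K) (a : op) : op := fun p => k *: a p.
Definition opmul (a b : op) : op := fun p => a (b p).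
Definition opid : op := fun p => p.

Definition Xpow (i : nat) : op := iter i (opmul Xop) opid.
Definition Ypow (j : nat) : op := iter j (opmul Yop) opid.

(* S_1 = K<x,y | yx = 1>, viewed (via its faithful action) as the K-subalgebra
   of End_K(K[x]) generated by x and y (closed under pointwise equality). *)
Inductive S1 : op -> Prop :=
| S1_X : S1 Xop
| S1_Y : S1 Yop
| S1_scal (k : K) : S1 (opscale k opid)
| S1_add a b : S1 a -> S1 b -> S1 (opadd a b)
| S1_mul a b : S1 a -> S1 b -> S1 (opmul a b)
| S1_ext a b : S1 a -> a =1 b -> S1 b.

Definition Eop (i j : nat) : op :=
  opsub (opmul (Xpow i) (Ypow j)) (opmul (Xpow i.+1) (Ypow j.+1)).

Definition inF (a : op) : Prop :=
  exists (n : nat) (c : nat -> nat -> K),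
    forall p, a p = \sum_(i < n) \sum_(j < n) c i j *: Eop i j p.

(* The Laurent polynomial u = x^(-s) p(x) lifts to y^s p(x) in S_1;
   under S_1/F ~ K[x,x^-1] (x |-> x, y |-> x^-1) its image is u. *)
Definition laurent_lift (s : nat) (p : {poly K}) : op :=
  opmul (Ypow s) (fun q => p * q).

Definition laurent_deg (s : nat) (p : {poly K}) : int :=
  ((size p).-1)%:Z - s%:Z.

Definition dim_ker (phi : op) (d : nat) : Prop :=
  exists B : 'I_d -> {poly K},
    (forall c : 'I_d -> K, \sum_(i < d) c i *: B i = 0 -> forall i, c i = 0) /\
    (forall p, phi p = 0 <-> exists c : 'I_d -> K, p = \sum_(i < d) c i *: B i).

Definition dim_coker (phi : op) (d : nat) : Prop :=
  exists B : 'I_d -> {poly K},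
    (forall (r : {poly K}) (c : 'I_d -> K),
        phi r + \sum_(i < d) c i *: B i = 0 -> forall i, c i = 0) /\
    (forall q, exists (r : {poly K}) (c : 'I_d -> K),
        q = phi r + \sum_(i < d) c i *: B i).

Definition has_index (phi : op) (n : int) : Prop :=
  exists dk dc, dim_ker phi dk /\ dim_coker phi dc /\ n = dk%:Z - dc%:Z.

Definition is_S1_aut (sigma : op -> op) : Prop :=
  (forall a, S1 a -> S1 (sigma a)) /\
      (forall b, S1 b -> exists a, S1 a /\ sigma a =1 b) /\
      (forall a b, S1 a -> S1 b -> sigma a =1 sigma b -> a =1 b) /\
      (forall a b, S1 a -> S1 b -> sigma (opadd a b) =1 opadd (sigma a) (sigma b)) /\
      (forall k a, S1 a -> sigma (opscale k a) =1 opscale k (sigma a)) /\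
      (forall a b, S1 a -> S1 b -> sigma (opmul a b) =1 opmul (sigma a) (sigma b)) /\
      sigma opid =1 opid.

End Jacobson.

(* Main.v *)
Require Import Defs.
From HB Require Import structures.
From mathcomp Require Import all_boot all_order all_algebra.
From Stdlib Require Import FunctionalExtensionality ClassicalEpsilon Classical.
Set Implicit Arguments. Unset Strict Implicit. Unset Printing Implicit Defensive.
Import Order.TTheory GRing.Theory Num.Theory.
Local Open Scope ring_scope.

Section Work.
Variable K : fieldType.
Implicit Types (a b : op K) (p q r : {poly K}).

Lemma coefY p i : (Yop p)`_i = p`_i.+1.
Proof.
rewrite /Yop coef_poly; case: ltnP => // H.
by rewrite nth_default // (leq_trans H).
Qed.

Lemma XpowE i p : Xpow i p = 'X^i * p.
Proof. elim: i p => [|i IH] p /=; first by rewrite expr0 mul1r.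
by rewrite /opmul /Xop IH exprS mulrA. Qed.

Lemma coefYpow s p i : (Ypow s p)`_i = p`_(i + s).
Proof. elim: s p i => [|s IH] p i /=; first by rewrite addn0.
by rewrite /opmul coefY IH addnS addSn. Qed.

Lemma YpowXM s N q : Ypow s ('X^(N + s) * q) = 'X^N * q.
Proof. apply/polyP => i; rewrite coefYpow !coefXnM.
rewrite ltn_add2r; case: ltnP => // H.
by rewrite subnDr.
Qed.

Definition lin a := forall k p q, a (k *: p + q) = k *: a p + a q.

Lemma lin0 a : lin a -> a 0 = 0.
Proof. move=> H; have := H 1 0 0; rewrite scale1r !addr0 => /(congr1 (fun t => t - a 0)).
by rewrite subrr addrK scale1r => E; rewrite -E. Qed.

Lemma linD a : lin a -> forall p q, a (p + q) = a p + a q.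
Proof. move=> H p q; have := H 1 p q; rewrite !scale1r. done. Qed.

Lemma linZ a : lin a -> forall k p, a (k *: p) = k *: a p.
Proof. by move=> H k p; rewrite -[k *: p]addr0 H (lin0 H) addr0. Qed.

Lemma linN a : lin a -> forall p, a (- p) = - a p.
Proof. by move=> H p; rewrite -scaleN1r linZ // scaleN1r. Qed.

Lemma linB a : lin a -> forall p q, a (p - q) = a p - a q.
Proof. by move=> H p q; rewrite linD // linN. Qed.

Lemma lin_sum a (I : Type) (r : seq I) (P : pred I) (F : I -> {poly K}) :
  lin a -> a (\sum_(i <- r | P i) F i) = \sum_(i <- r | P i) a (F i).
Proof. move=> H; elim/big_rec2: _ => [|i y1 y2 _ <-]; first exact: lin0.
exact: linD. Qed.

Lemma linY : lin (@Yop K).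
Proof. by move=> k p q; apply/polyP => i; rewrite coefD coefZ !coefY coefD coefZ. Qed.


Lemma EopE i j p : Eop i j p = p`_j *: 'X^i.
Proof.
rewrite /Eop /opsub /opmul !XpowE exprS (mulrC 'X) -mulrA -mulrBr -mul_polyC mulrC; congr (_ * _).
apply/polyP => k; rewrite coefB coefXM coefC !coefYpow.
case: k => [|k] /=; first by rewrite subr0.
by rewrite addSn -addnS subrr.
Qed.

Definition inF' a := exists N, [/\ lin a, (forall q, a ('X^N * q) = 0) & (forall p, (size (a p) <= N)%N)].

Lemma inF'_mono a N M : (N <= M)%N -> lin a -> (forall q, a ('X^N * q) = 0) -> forall q, a ('X^M * q) = 0.
Proof. by move=> NM La H q; rewrite -(subnK NM) addnC exprD -mulrA H. Qed.

Lemma inF'_mono2 a N M : (N <= M)%N -> lin a -> (forall q, a ('X^N * q) = 0) -> (forall p, (size (a p) <= N)%N) ->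
  [/\ lin a, (forall q, a ('X^M * q) = 0) & (forall p, (size (a p) <= M)%N)].
Proof. move=> NM La H1 H2; split => //; first exact: inF'_mono H1.
by move=> p; apply: leq_trans (H2 p) NM. Qed.

Lemma poly_split N p : p = \sum_(j < N) p`_j *: 'X^j + 'X^N * \poly_(i < size p) p`_(i + N).
Proof.
apply/polyP => k; rewrite coefD coefXnM coef_sum.
case: ltnP => H.
  rewrite addr0 (bigD1 (Ordinal H)) //= coefZ coefXn eqxx mulr1 big1 ?addr0 //.
  by move=> j /eqP Hj; rewrite coefZ coefXn; case: eqP => [E|]; [case: Hj; apply: val_inj|rewrite mulr0].
rewrite big1 ?add0r; last first.
  by move=> j _; rewrite coefZ coefXn; case: eqP => [E|]; [move: (ltn_ord j); rewrite -E ltnNge H|rewrite mulr0].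
rewrite coef_poly subnK //; case: ltnP => // H2.
by rewrite nth_default // (leq_trans H2) // leq_subr.
Qed.

Lemma inF_equiv a : inF a <-> inF' a.
Proof.
split.
  case=> n [c Hc]; exists n; split.
  - move=> k p q; rewrite !Hc scaler_sumr -big_split /=; apply: eq_bigr => i _.
    rewrite scaler_sumr -big_split /=; apply: eq_bigr => j _.
    by rewrite !EopE coefD coefZ scalerDl scalerDr !scalerA mulrCA mulrA.
  - move=> q; rewrite Hc big1 // => i _; rewrite big1 // => j _.
    by rewrite EopE coefXnM ltn_ord scale0r scaler0.
  - move=> p; rewrite Hc; apply: (leq_trans (size_sum _ _ _)).
    apply/bigmax_leqP => i _; apply: (leq_trans (size_sum _ _ _)).
    apply/bigmax_leqP => j _; rewrite EopE; apply: (leq_trans (size_scale_leq _ _)).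
    by apply: (leq_trans (size_scale_leq _ _)); rewrite size_polyXn.
case=> N [La H1 H2]; exists N, (fun i j => (a 'X^j)`_i) => p.
rewrite {1}(@poly_split N p) linD // H1 addr0 lin_sum //.
rewrite exchange_big /=; apply: eq_bigr => j _.
rewrite linZ // {1}[a 'X^j](@poly_split N).
have -> : \poly_(i < size (a 'X^j)) (a 'X^j)`_(i + N) = 0.
  apply/polyP => k; rewrite coef_poly coef0; case: ltnP => // _.
  by rewrite nth_default // (leq_trans (H2 _)) // leq_addl.
rewrite mulr0 addr0 scaler_sumr; apply: eq_bigr => i _.
by rewrite EopE !scalerA mulrC.
Qed.

Definition good a := [/\ lin a, exists m, forall p, (size (a p) <= size p + m)%N &
  exists m, forall N q, exists r, a ('X^(N + m) * q) = 'X^N * r].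

Lemma good_ext a b : good a -> a =1 b -> good b.
Proof. by move=> Ga E; rewrite -(functional_extensionality _ _ E). Qed.

Lemma goodX : good (@Xop K).
Proof.
split.
- by move=> k p q; rewrite /Xop mulrDr scalerAr.
- by exists 1%N => p; rewrite /Xop mulrC; apply: (leq_trans (size_mul_leq _ _)); rewrite size_polyX addn2 addn1.
- by exists 0%N => N q; exists ('X * q); rewrite /Xop addn0 mulrCA.
Qed.

Lemma size_Y p : (size (Yop p) <= size p)%N.
Proof. exact: size_poly. Qed.

Lemma goodY : good (@Yop K).
Proof.
split; first exact: linY.
- by exists 0%N => p; rewrite addn0 size_Y.
- exists 1%N => N q; exists q; exact: (@YpowXM 1).
Qed.

Lemma goodS k : good (opscale k (@opid K)).
Proof.
split.
- by move=> c p q; rewrite /opscale /opid scalerDr !scalerA mulrC.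
- by exists 0%N => p; rewrite addn0 /opscale size_scale_leq.
- by exists 0%N => N q; exists (k *: q); rewrite /opscale /opid addn0 scalerAr.
Qed.

Lemma goodD a b : good a -> good b -> good (opadd a b).
Proof.
case=> La [m1 H1] [n1 G1] [Lb [m2 H2] [n2 G2]]; split.
- by move=> k p q; rewrite /opadd La Lb scalerDr addrACA.
- exists (m1 + m2)%N => p; rewrite /opadd; apply: (leq_trans (size_add _ _)).
  rewrite geq_max; apply/andP; split.
    by apply: leq_trans (H1 p) _; rewrite leq_add2l leq_addr.
  by apply: leq_trans (H2 p) _; rewrite leq_add2l leq_addl.
- exists (n1 + n2)%N => N q.
  have [r1 E1] := G1 (N + n2)%N q; have [r2 E2] := G2 (N + n1)%N q.
  have E1' : a ('X^(N + (n1 + n2)) * q) = 'X^(N+n2) * r1 by rewrite (addnC n1) addnA.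
  have E2' : b ('X^(N + (n1 + n2)) * q) = 'X^(N+n1) * r2 by rewrite addnA.
  exists ('X^n2 * r1 + 'X^n1 * r2); rewrite /opadd E1' E2'.
  by rewrite !exprD -!mulrA mulrDr.
Qed.

Lemma goodM a b : good a -> good b -> good (opmul a b).
Proof.
case=> La [m1 H1] [n1 G1] [Lb [m2 H2] [n2 G2]]; split.
- by move=> k p q; rewrite /opmul Lb La.
- exists (m2 + m1)%N => p; rewrite /opmul; apply: leq_trans (H1 _) _.
  by rewrite addnA leq_add2r H2.
- exists (n2 + n1)%N => N q.
  have [r1 E1] := G2 (N + n1)%N q; have [r2 E2] := G1 N r1.
  have E1' : b ('X^(N + (n2 + n1)) * q) = 'X^(N + n1) * r1 by rewrite (addnC n2) addnA.
  by exists r2; rewrite /opmul E1' E2.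
Qed.

Lemma S1_good a : S1 a -> good a.
Proof.
elim=> {a}.
- exact: goodX.
- exact: goodY.
- exact: goodS.
- by move=> a b _ Ha _ Hb; apply: goodD.
- by move=> a b _ Ha _ Hb; apply: goodM.
- by move=> a b _ Ha E; apply: good_ext E.
Qed.

Lemma inF'_add a b : inF' a -> inF' b -> inF' (opadd a b).
Proof.
case=> N1 [La H1 S1'] [N2 [Lb H2 S2]].
have [La' H1' S1''] := inF'_mono2 (leq_maxl N1 N2) La H1 S1'.
have [Lb' H2' S2'] := inF'_mono2 (leq_maxr N1 N2) Lb H2 S2.
exists (maxn N1 N2); split.
- by move=> k p q; rewrite /opadd La Lb scalerDr addrACA.
- by move=> q; rewrite /opadd H1' H2' addr0.
- by move=> p; rewrite /opadd; apply: (leq_trans (size_add _ _)); rewrite geq_max S1'' S2'.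
Qed.

Lemma inF'_scale k a : inF' a -> inF' (opscale k a).
Proof.
case=> N [La H1 S]; exists N; split.
- by move=> c p q; rewrite /opscale La scalerDr !scalerA mulrC.
- by move=> q; rewrite /opscale H1 scaler0.
- by move=> p; rewrite /opscale (leq_trans (size_scale_leq _ _)).
Qed.

Lemma inF'_ext a b : inF' a -> a =1 b -> inF' b.
Proof. by move=> Ga E; rewrite -(functional_extensionality _ _ E). Qed.

Lemma inF'_sub a b : inF' a -> inF' b -> inF' (opsub a b).
Proof.
move=> Ha Hb; apply: (inF'_ext (inF'_add Ha (inF'_scale (-1) Hb))) => p.
by rewrite /opadd /opscale /opsub scaleN1r.
Qed.

Lemma inF'_left g a : good g -> inF' a -> inF' (opmul g a).
Proof.
case=> Lg [m Hm] _ [N [La H1 S]]; exists (N + m)%N; split.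
- by move=> k p q; rewrite /opmul La Lg.
- move=> q; rewrite /opmul (inF'_mono (leq_addr m N) La H1); exact: lin0.
- by move=> p; rewrite /opmul (leq_trans (Hm _)) // leq_add2r.
Qed.

Lemma inF'_right g a : good g -> inF' a -> inF' (opmul a g).
Proof.
case=> Lg _ [m Hm] [N [La H1 S]]; exists (N + m)%N; split.
- by move=> k p q; rewrite /opmul Lg La.
- by move=> q; rewrite /opmul; have [r ->] := Hm N q; rewrite H1.
- by move=> p; rewrite /opmul (leq_trans (S _)) // leq_addr.
Qed.

Lemma inF'_zero : inF' (fun _ : {poly K} => 0).
Proof. by exists 0%N; split => [k p q|q|p]; rewrite ?scaler0 ?addr0 ?size_poly0. Qed.

Lemma inF'_good a : inF' a -> good a.
Proof.
case=> N [La H1 S]; split => //.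
- by exists N => p; rewrite (leq_trans (S _)) // leq_addl.
- by exists N => M q; exists 0; rewrite mulr0 addnC (inF'_mono (leq_addr M N) La H1).
Qed.

Definition mulop r : op K := fun q => r * q.
Definition eqF a b := inF' (opsub a b).

Lemma S1_id : S1 (@opid K).
Proof. by apply: (S1_ext (S1_scal 1)) => p; rewrite /opscale /opid scale1r. Qed.

Lemma S1_Ypow s : S1 (@Ypow K s).
Proof. elim: s => [|s IH]; [exact: S1_id | exact: (S1_mul (S1_Y K) IH)]. Qed.

Lemma S1_Xpow s : S1 (@Xpow K s).
Proof. elim: s => [|s IH]; [exact: S1_id | exact: (S1_mul (S1_X K) IH)]. Qed.

Lemma S1_mulop r : S1 (mulop r).
Proof.
elim/poly_ind: r => [|r c IH].
  by apply: (S1_ext (S1_scal 0)) => p; rewrite /opscale /mulop scale0r mul0r.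
apply: (S1_ext (S1_add (S1_mul IH (S1_X K)) (S1_scal c))) => p.
by rewrite /opadd /opmul /mulop /Xop /opscale /opid mulrDl mul_polyC -!mulrA.
Qed.

Lemma S1_lift s p : S1 (laurent_lift s p).
Proof. exact: S1_mul (S1_Ypow _) (S1_mulop _). Qed.

Lemma good_lift s p : good (laurent_lift s p).
Proof. exact/S1_good/S1_lift. Qed.

Lemma eqF_refl a : eqF a a.
Proof. by apply: (inF'_ext inF'_zero) => p; rewrite /opsub subrr. Qed.

Lemma eqF_sym a b : eqF a b -> eqF b a.
Proof. move=> H; apply: (inF'_ext (inF'_scale (-1) H)) => p.
by rewrite /opscale /opsub scaleN1r opprB. Qed.

Lemma eqF_trans a b c : eqF a b -> eqF b c -> eqF a c.
Proof. move=> H1 H2; apply: (inF'_ext (inF'_add H1 H2)) => p.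
by rewrite /opadd /opsub addrA subrK. Qed.

Lemma eqF_ext a b : a =1 b -> eqF a b.
Proof. by move=> E; rewrite (functional_extensionality _ _ E); apply: eqF_refl. Qed.

Lemma eqF_add a b c d : eqF a b -> eqF c d -> eqF (opadd a c) (opadd b d).
Proof. move=> H1 H2; apply: (inF'_ext (inF'_add H1 H2)) => p.
by rewrite /opadd /opsub addrACA opprD. Qed.

Lemma eqF_scale k a b : eqF a b -> eqF (opscale k a) (opscale k b).
Proof. move=> H; apply: (inF'_ext (inF'_scale k H)) => p.
by rewrite /opscale /opsub scalerBr. Qed.

Lemma eqF_left g a b : good g -> eqF a b -> eqF (opmul g a) (opmul g b).
Proof. move=> [Lg ? ?] H; apply: (inF'_ext (inF'_left _ H)) => [|p]; first by split.
by rewrite /opmul /opsub linB. Qed.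

Lemma eqF_right g a b : good g -> eqF a b -> eqF (opmul a g) (opmul b g).
Proof. by move=> Gg H; apply: (inF'_ext (inF'_right Gg H)). Qed.

Lemma eqF_mul a b c d : good a -> good d -> eqF a b -> eqF c d -> eqF (opmul a c) (opmul b d).
Proof. move=> Ga Gd H1 H2; apply: eqF_trans (eqF_left Ga H2) (eqF_right Gd H1). Qed.

Lemma eqF_inF a b : eqF a b -> inF' a -> inF' b.
Proof. move=> H Ha; apply: (inF'_ext (inF'_sub Ha H)) => p.
by rewrite /opsub opprB addrC subrK. Qed.

Lemma Ypow_add s t r : Ypow (s + t) r = Ypow s (Ypow t r).
Proof. by apply/polyP => i; rewrite !coefYpow addnA. Qed.

Lemma lift_shift s t p : laurent_lift (s + t) ('X^t * p) = laurent_lift s p.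
Proof.
apply: functional_extensionality => q; rewrite /laurent_lift /opmul Ypow_add -mulrA.
by rewrite -[t]add0n YpowXM expr0 mul1r.
Qed.

Lemma linYpow s : lin (@Ypow K s).
Proof. by move=> k p q; apply/polyP => i; rewrite coefD coefZ !coefYpow coefD coefZ. Qed.

Lemma lift_sub s t p q : opsub (laurent_lift s p) (laurent_lift t q) =
   laurent_lift (s + t) ('X^t * p - 'X^s * q).
Proof.
apply: functional_extensionality => r.
rewrite -{1}(lift_shift s t p) -{1}(lift_shift t s q) addnC /opsub /laurent_lift /opmul.
by rewrite mulrBl linB //; apply: linYpow.
Qed.

Lemma lift_inF s p : inF' (laurent_lift s p) -> p = 0.
Proof.
case=> N [_ H _]; have := H ('X^s); rewrite /laurent_lift /opmul -exprD mulrC YpowXM.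
move=> /eqP; rewrite mulf_eq0 expf_eq0 polyX_eq0 andbF /=.
by move/eqP.
Qed.

Lemma Ydecomp r : r = 'X * Yop r + (r`_0)%:P.
Proof. apply/polyP => k; rewrite coefD coefXM coefC coefY.
by case: k => [|k] /=; rewrite ?add0r ?addr0. Qed.

Lemma comm_pY p : eqF (opmul (mulop p) (@Yop K)) (opmul (@Yop K) (mulop p)).
Proof.
have E : forall r, opsub (opmul (mulop p) (@Yop K)) (opmul (@Yop K) (mulop p)) r = - (r`_0) *: Yop p.
  move=> r; rewrite /opsub /opmul /mulop {2}[r]Ydecomp mulrDr mulrCA linD; last exact: linY.
  rewrite -[Yop ('X * _)]/(Ypow 1 ('X^(0 + 1) * (p * Yop r))) YpowXM expr0 mul1r.
  rewrite [p * _%:P]mulrC mul_polyC linZ; last exact: linY.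
  by rewrite opprD addrA subrr add0r scaleNr.
rewrite /eqF (functional_extensionality _ _ E).
exists (maxn 1 (size p)); split.
- by move=> k a b; rewrite coefD coefZ opprD scalerDl scalerA mulrN.
- move=> q; rewrite coefXnM; case: (maxn 1 (size p)) (leq_maxl 1 (size p)) => // n _.
  by rewrite oppr0 scale0r.
- move=> r; apply: leq_trans (size_scale_leq _ _) _; apply: leq_trans (size_Y _) _.
  exact: leq_maxr.
Qed.

Lemma good_Ypow s : good (@Ypow K s).
Proof. exact/S1_good/S1_Ypow. Qed.
Lemma good_mulop p : good (mulop p).
Proof. exact/S1_good/S1_mulop. Qed.
Lemma good_Y : good (@Yop K).
Proof. exact: goodY. Qed.

Lemma comm_pYs p s : eqF (opmul (mulop p) (Ypow s)) (opmul (Ypow s) (mulop p)).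
Proof.
elim: s => [|s IH]; first exact: eqF_refl.
change (eqF (opmul (opmul (mulop p) (@Yop K)) (Ypow s)) (opmul (@Yop K) (opmul (Ypow s) (mulop p)))).
apply: eqF_trans (eqF_right (good_Ypow s) (comm_pY p)) _.
exact: (eqF_left good_Y IH).
Qed.

Lemma lift_mul s1 p1 s2 p2 :
  eqF (opmul (laurent_lift s1 p1) (laurent_lift s2 p2)) (laurent_lift (s1 + s2) (p1 * p2)).
Proof.
have H := eqF_left (good_Ypow s1) (eqF_right (good_mulop p2) (comm_pYs p1 s2)).
apply: eqF_trans H _; apply: eqF_ext => r.
by rewrite /laurent_lift /opmul /mulop Ypow_add mulrA.
Qed.

Lemma S1_symbol a : S1 a -> exists s p, eqF a (laurent_lift s p).
Proof.
elim=> {a}.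
- by exists 0%N, 'X; apply: eqF_ext.
- exists 1%N, 1; apply: eqF_ext => r; by rewrite /laurent_lift /opmul mul1r.
- by move=> k; exists 0%N, k%:P; apply: eqF_ext => r; rewrite /laurent_lift /opmul /opscale /opid mul_polyC.
- move=> a b _ [s1 [p1 H1]] _ [s2 [p2 H2]].
  exists (s1 + s2)%N, ('X^s2 * p1 + 'X^s1 * p2).
  apply: eqF_trans (eqF_add H1 H2) _; apply: eqF_ext => r.
  rewrite /opadd -{1}(lift_shift s1 s2 p1) -{1}(lift_shift s2 s1 p2) addnC.
  by rewrite /laurent_lift /opmul mulrDl linD //; apply: linYpow.
- move=> a b Sa [s1 [p1 H1]] _ [s2 [p2 H2]]; exists (s1 + s2)%N, (p1 * p2).
  apply: eqF_trans (lift_mul s1 p1 s2 p2).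
  exact: eqF_mul (S1_good Sa) (good_lift _ _) H1 H2.
- move=> a b _ H E; by rewrite -(functional_extensionality _ _ E).
Qed.

Definition rv n (p : {poly K}) : 'rV[K]_n := \row_(i < n) p`_i.
Definition fv n (v : 'rV[K]_n) (k : nat) : K := if insub k is Some j then v 0 j else 0.
Definition pv n (v : 'rV[K]_n) : {poly K} := \poly_(i < n) fv v i.

Lemma coef_pv n (v : 'rV[K]_n) (j : 'I_n) : (pv v)`_j = v 0 j.
Proof. by rewrite coef_poly ltn_ord /fv valK. Qed.

Lemma coef_pv_ge n (v : 'rV[K]_n) k : (n <= k)%N -> (pv v)`_k = 0.
Proof. by move=> H; rewrite coef_poly ltnNge H. Qed.

Lemma pv_ext n (v w : {poly K}) : (size v <= n)%N -> (size w <= n)%N ->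
  (forall j : 'I_n, v`_j = w`_j) -> v = w.
Proof.
move=> Hv Hw E; apply/polyP => k; case: (ltnP k n) => Hk; first exact: (E (Ordinal Hk)).
by rewrite !nth_default // ?(leq_trans Hv) ?(leq_trans Hw).
Qed.

Lemma size_pv n (v : 'rV[K]_n) : (size (pv v) <= n)%N.
Proof. exact: size_poly. Qed.

Lemma pvK n p : (size p <= n)%N -> pv (rv n p) = p.
Proof. by move=> H; apply: (pv_ext (size_pv _) H) => j; rewrite coef_pv mxE. Qed.

Lemma rvK n (v : 'rV[K]_n) : rv n (pv v) = v.
Proof. by apply/rowP => j; rewrite mxE coef_pv. Qed.

Lemma pv_mul d n (c : 'I_d -> K) (B : 'M[K]_(d, n)) :
  \sum_(i < d) c i *: pv (row i B) = pv ((\row_i c i) *m B).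
Proof.
apply: (pv_ext _ (size_pv _)) => [|j].
  by apply: (leq_trans (size_sum _ _ _)); apply/bigmax_leqP => i _; apply: (leq_trans (size_scale_leq _ _)); apply: size_pv.
rewrite coef_sum coef_pv !mxE; apply: eq_bigr => i _; by rewrite coefZ coef_pv !mxE.
Qed.

Lemma pv_inj n (v w : 'rV[K]_n) : pv v = pv w -> v = w.
Proof. by move=> E; rewrite -(rvK v) E rvK. Qed.

Lemma pv0 n : pv (0 : 'rV[K]_n) = 0.
Proof. by apply: (pv_ext (size_pv _)) => [|j]; rewrite ?size_poly0 // coef_pv coef0 mxE. Qed.

Lemma pvD n (v w : 'rV[K]_n) : pv (v + w) = pv v + pv w.
Proof.
apply: (pv_ext (size_pv _)) => [|j]; last by rewrite coefD !coef_pv mxE.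
by apply: (leq_trans (size_add _ _)); rewrite geq_max !size_pv.
Qed.

Lemma poly_small N (u : {poly K}) : (size u <= N)%N -> u = \sum_(j < N) u`_j *: 'X^j.
Proof.
move=> H; rewrite {1}(@poly_split N u); set t := \poly_(_ < _) _.
suff -> : t = 0 by rewrite mulr0 addr0.
apply/polyP => k; rewrite coef_poly coef0; case: ifP => // _.
by rewrite nth_default // (leq_trans H) // leq_addl.
Qed.

Definition psimx N M (psi : op K) : 'M[K]_(N, M) := \matrix_(i < N, j < M) (psi 'X^i)`_j.

Lemma rv_psi N M (psi : op K) (u : {poly K}) : lin psi -> (size u <= N)%N ->
  rv M (psi u) = rv N u *m psimx N M psi.
Proof.
move=> L H; apply/rowP => j; rewrite !mxE {1}(poly_small H) lin_sum // coef_sum.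
by apply: eq_bigr => i _; rewrite linZ // coefZ !mxE.
Qed.

Lemma findim N M (psi : op K) : lin psi -> (forall u : {poly K}, size (psi u) <= M)%N ->
  exists dk dc (bk : 'I_dk -> {poly K}) (bc : 'I_dc -> {poly K}),
  [/\ (forall i, size (bk i) <= N)%N, (forall i, size (bc i) <= M)%N,
      (forall c, \sum_i c i *: bk i = 0 -> forall i, c i = 0),
      (forall u : {poly K}, (size u <= N)%N -> psi u = 0 -> exists c, u = \sum_i c i *: bk i) &
      (forall i, psi (bk i) = 0)] /\
  [/\ (forall (u : {poly K}) c, (size u <= N)%N -> psi u + \sum_i c i *: bc i = 0 -> forall i, c i = 0),
      (forall t : {poly K}, (size t <= M)%N -> exists (u : {poly K}) c, (size u <= N)%N /\ t = psi u + \sum_i c i *: bc i) &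
      (dk + M = dc + N)%N ].
Proof.
move=> L SM; set A := psimx N M psi.
have rvP (u : {poly K}) : (size u <= N)%N -> rv M (psi u) = rv N u *m A by move=> H; apply: rv_psi.
set Bk := row_base (kermx A); set Bc := row_base (A^C)%MS.
exists (\rank (kermx A)), (\rank (A^C)%MS), (fun i => pv (row i Bk)), (fun i => pv (row i Bc)).
split; split.
- by move=> i; apply: size_pv.
- by move=> i; apply: size_pv.
- move=> c; rewrite pv_mul -(pv0 N) => /pv_inj.
  rewrite -(mul0mx _ Bk) => /(row_free_inj (row_base_free _)) /rowP E i.
  by have := E i; rewrite !mxE.
- move=> u Hu H0; have : (rv N u <= kermx A)%MS.
    by apply/sub_kermxP; rewrite -rvP // H0; apply/rowP => j; rewrite !mxE coef0.
  rewrite -(eq_row_base (kermx A)) => /submxP [D ED].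
  exists (fun i => D 0 i); rewrite pv_mul -(pvK Hu) ED; congr (pv (_ *m _)).
  by apply/rowP => i; rewrite mxE.
- move=> i; rewrite -(pvK (SM _)) rvP ?size_pv // rvK.
  have : (row i Bk <= kermx A)%MS by rewrite (submx_trans (row_sub _ _)) // eq_row_base.
  by move/sub_kermxP => ->; rewrite pv0.
- move=> u c Hu; rewrite pv_mul -(pvK (SM u)) -pvD -(pv0 M) => /pv_inj.
  rewrite rvP // => /eqP; rewrite addrC addr_eq0 => /eqP E.
  have : ((\row_i c i) *m Bc <= A :&: A^C)%MS.
    rewrite sub_capmx; apply/andP; split.
      by rewrite E -mulNmx submxMl.
    by rewrite (submx_trans (submxMl _ _)) // eq_row_base.
  rewrite capmx_compl submx0 -(mul0mx _ Bc) => /eqP /(row_free_inj (row_base_free _)) /rowP F i.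
  by have := F i; rewrite !mxE.
- move=> t Ht; have : (rv M t <= A + A^C)%MS by apply: submx_full; apply: addsmx_compl_full.
  case/sub_addsmxP => [[u v]] /= Et.
  have : (v *m A^C <= Bc)%MS by rewrite eq_row_base submxMl.
  case/submxP => D ED.
  exists (pv u), (fun i => D 0 i); split; first exact: size_pv.
  rewrite pv_mul -(pvK (SM _)) rvP ?size_pv // rvK -pvD.
  have -> : \row_i D 0 i = D by apply/rowP => i; rewrite mxE.
  by rewrite -ED -Et pvK.
- rewrite mxrank_ker mxrank_compl.
  have h1 := rank_leq_row A; have h2 := rank_leq_col A.
  by rewrite [LHS]addnC [RHS]addnC !addnBA // addnC.
Qed.

Lemma poly_split2 N r : r = \poly_(j < N) r`_j + 'X^N * \poly_(i < size r) r`_(i + N).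
Proof.
apply/polyP => k; rewrite coefD coefXnM !coef_poly; case: ltnP => H; first by rewrite addr0.
rewrite add0r subnK //; case: ltnP => // H2.
by rewrite nth_default // (leq_trans H2) // leq_subr.
Qed.

Lemma low_zero N (u w : {poly K}) : (size u <= N)%N -> u = 'X^N * w -> u = 0.
Proof.
move=> Hs E; have [w0|w0] := eqVneq w 0; first by rewrite E w0 mulr0.
move: Hs; rewrite E mulrC size_mulXn // => /leq_trans/(_ (leqnn _)).
by rewrite -[X in (_ <= X)%N]addn0 leq_add2l leqn0 size_poly_eq0 (negPf w0).
Qed.

Lemma divp_sumZ (I : finType) (c : I -> K) (f : I -> {poly K}) (q : {poly K}) :
  (\sum_(i : I) c i *: f i) %/ q = \sum_(i : I) c i *: (f i %/ q).
Proof.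
elim/big_rec2: _ => [|i y1 y2 _ <-]; first by rewrite div0p.
by rewrite divpD divpZl.
Qed.

Lemma index_lift a s p : good a -> inF' (opsub a (laurent_lift s p)) -> p != 0 ->
  has_index a (- laurent_deg s p).
Proof.
case=> La _ _ [N0 [Lf Hf _]] p0.
pose N := (N0 + s)%N; pose q := 'X^N0 * p.
have q0 : q != 0 by rewrite mulf_neq0 // expf_neq0 // polyX_eq0.
have aX g : a ('X^N * g) = q * g.
  have := inF'_mono (leq_addr s N0) Lf Hf g; rewrite /opsub => /eqP; rewrite subr_eq0 => /eqP ->.
  by rewrite /laurent_lift /opmul mulrCA YpowXM mulrA.
pose M := (size q).-1.
have sq : size q = (N0 + size p)%N by rewrite /q mulrC size_mulXn.
have hq : size q = M.+1 by rewrite /M prednK // size_poly_gt0.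
pose psi := fun u => a u %% q.
have Lpsi : lin psi by move=> k u v; rewrite /psi La modpD modpZl.
have Spsi u : (size (psi u) <= M)%N by rewrite /M -ltnS prednK ?ltn_modpN0 // size_poly_gt0.
have [dk [dc [bk [bc [[Sbk Sbc Ik Spk Zk] [Ic Spc Edim]]]]]] := @findim N M psi Lpsi Spsi.
have linsum (c : 'I_dk -> K) (f : 'I_dk -> {poly K}) : a (\sum_i c i *: f i) = \sum_i c i *: a (f i).
  by rewrite lin_sum //; apply: eq_bigr => i _; rewrite linZ.
exists dk, dc; split; [|split].
- pose Bk := fun i => bk i - 'X^N * (a (bk i) %/ q).
  have aBk i : a (Bk i) = 0.
    rewrite /Bk linB // aX {1}(divp_eq (a (bk i)) q).
    by have := Zk i; rewrite /psi => ->; rewrite addr0 mulrC subrr.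
  have sumBk c : \sum_i c i *: Bk i = \sum_i c i *: bk i - 'X^N * \sum_i c i *: (a (bk i) %/ q).
    rewrite mulr_sumr -sumrB; apply: eq_bigr => i _; by rewrite scalerBr scalerAr.
  exists Bk; split.
    move=> c; rewrite sumBk => /eqP; rewrite subr_eq0 => /eqP E; apply: Ik.
    apply: low_zero E; apply: (leq_trans (size_sum _ _ _)); apply/bigmax_leqP => i _.
    exact: (leq_trans (size_scale_leq _ _)).
  move=> r; split; last first.
    by case=> c ->; rewrite linsum big1 // => i _; rewrite aBk scaler0.
  rewrite {1}(poly_split2 N r); set u := \poly_(_ < _) _; set g := \poly_(_ < _) _ => ar.
  have Su : (size u <= N)%N by apply: size_poly.
  move: ar; rewrite linD // aX => /eqP; rewrite addr_eq0 => /eqP au.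
  have [c Ec] : exists c, u = \sum_i c i *: bk i.
    apply: Spk => //; by rewrite /psi au mulrC modpN modp_mull oppr0.
  exists c; rewrite sumBk -divp_sumZ -linsum -Ec au [q * g]mulrC divpN mulpK // mulrN opprK.
  by rewrite {1}(poly_split2 N r).
- exists bc; split.
    move=> r c; rewrite (poly_split2 N r); set u := \poly_(_ < _) _; set g := \poly_(_ < _) _.
    have Su : (size u <= N)%N by apply: size_poly.
    rewrite linD // aX => E; apply: (Ic u) => //.
    have Sc : (size (\sum_i c i *: bc i)%R < size q)%N.
      rewrite hq ltnS; apply: (leq_trans (size_sum _ _ _)).
      apply/bigmax_leqP => i _; exact: (leq_trans (size_scale_leq _ _)).
    by move: (congr1 (fun t => t %% q) E); rewrite !modpD mulrC modp_mull addr0 (modp_small Sc) mod0p.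
  move=> t; have Sm : (size (t %% q)%R <= M)%N by rewrite -ltnS -hq ltn_modpN0.
  have [u [c [Su Et]]] := Spc _ Sm.
  exists (u + 'X^N * (t %/ q - a u %/ q)), c.
  rewrite linD // aX {1}(divp_eq t q) Et /psi.
  set A := a u; set R := A %% q; set D := A %/ q; set X := t %/ q.
  have eA : A = D * q + R by apply: divp_eq.
  rewrite eA mulrBr (mulrC q X) (mulrC q D).
  by rewrite (addrC (D*q) R) -(addrA R) (addrC (D*q)) subrK (addrC R) -addrA.
- have E : (dk + (size p).-1 = s + dc)%N.
    have hp : size p = (size p).-1.+1 by rewrite prednK // size_poly_gt0.
    move: Edim; rewrite /M sq {1}hp addnS /= /N.
    by rewrite addnCA [(dc + _)%N]addnCA => /addnI ->; rewrite addnC.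
  have -> : dk%:Z = (s + dc)%:Z - ((size p).-1)%:Z by rewrite -E PoszD addrK.
  by rewrite /laurent_deg opprB PoszD addrAC addrK.
Qed.

Lemma exists_kervec d1 d2 (C : 'M[K]_(d1, d2)) : (d2 < d1)%N ->
  exists v : 'rV[K]_d1, v != 0 /\ v *m C = 0.
Proof.
move=> lt; have : \rank (kermx C) != 0%N.
  rewrite mxrank_ker subn_eq0 -ltnNge; exact: leq_ltn_trans (rank_leq_col C) lt.
rewrite mxrank_eq0 => /eqP nz.
have [i Hi] : exists i, row i (kermx C) != 0.
  case: (pickP (fun i => row i (kermx C) != 0)) => [i Hi|H]; first by exists i.
  exfalso; apply: nz; apply/row_matrixP => i; rewrite row0; have := H i.
  by move/negbFE/eqP.
exists (row i (kermx C)); split => //; apply/sub_kermxP; exact: row_sub.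
Qed.

Lemma dim_le (phi : op K) d1 d2 (B1 : 'I_d1 -> {poly K}) (B2 : 'I_d2 -> {poly K}) :
  lin phi ->
  (forall r (c : 'I_d1 -> K), phi r + \sum_i c i *: B1 i = 0 -> forall i, c i = 0) ->
  (forall j, exists r (c : 'I_d2 -> K), B1 j = phi r + \sum_i c i *: B2 i) -> (d1 <= d2)%N.
Proof.
move=> L I1 S; rewrite leqNgt; apply/negP => lt.
pose R j := sval (constructive_indefinite_description _ (S j)).
have HR j : exists c : 'I_d2 -> K, B1 j = phi (R j) + \sum_i c i *: B2 i.
  exact: (svalP (constructive_indefinite_description _ (S j))).
pose C j := sval (constructive_indefinite_description _ (HR j)).
have HC j : B1 j = phi (R j) + \sum_i C j i *: B2 i.
  exact: (svalP (constructive_indefinite_description _ (HR j))).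
have [v [v0 vC]] := exists_kervec (\matrix_(j, k) C j k) lt.
have E : phi (- \sum_j v 0 j *: R j) + \sum_j v 0 j *: B1 j = 0.
  rewrite linN // (@lin_sum phi) //.
  have -> : \sum_j v 0 j *: B1 j = \sum_j v 0 j *: phi (R j) + \sum_j v 0 j *: \sum_i C j i *: B2 i.
    by rewrite -big_split; apply: eq_bigr => j _; rewrite HC scalerDr.
  have -> : \sum_j v 0 j *: \sum_i C j i *: B2 i = 0.
    rewrite (eq_bigr (fun j => \sum_i (v 0 j * C j i) *: B2 i)); last first.
      by move=> j _; rewrite scaler_sumr; apply: eq_bigr => i _; rewrite scalerA.
    rewrite exchange_big big1 // => i _; rewrite -scaler_suml.
    have h : \sum_j v 0 j * C j i = 0.
      have := congr1 (fun m : 'rV[K]_d2 => m 0 i) vC; rewrite !mxE => e; apply: etrans e.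
      by apply: eq_bigr => j _; rewrite mxE.
    by rewrite h scale0r.
  rewrite addr0 addrC (eq_bigr (fun j => phi (v 0 j *: R j))) ?subrr //.
  by move=> j _; rewrite linZ.
have := I1 _ _ E; move: v0 => /eqP v0 H; apply: v0; apply/rowP => j; rewrite mxE; exact: H.
Qed.

Lemma sum_delta d (B : 'I_d -> {poly K}) j : B j = \sum_i (i == j)%:R *: B i.
Proof. by rewrite (bigD1 j) //= eqxx scale1r big1 ?addr0 // => i /negPf ->; rewrite scale0r. Qed.

Lemma dim_ker_le a d1 d2 : dim_ker a d1 -> dim_ker a d2 -> (d1 <= d2)%N.
Proof.
case=> B1 [I1 S1'] [B2 [I2 S2]].
apply: (@dim_le (fun _ => 0) _ _ B1 B2).
- by move=> k p q; rewrite scaler0 addr0.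
- by move=> r c; rewrite add0r; apply: I1.
- move=> j; have : a (B1 j) = 0 by apply/S1'; exists (fun i => (i == j)%:R); apply: sum_delta.
  by case/S2 => c E; exists 0, c; rewrite add0r.
Qed.

Lemma dim_coker_le a d1 d2 : lin a -> dim_coker a d1 -> dim_coker a d2 -> (d1 <= d2)%N.
Proof.
move=> L [B1 [I1 S1']] [B2 [I2 S2]].
apply: (@dim_le a _ _ B1 B2) => // j; exact: S2.
Qed.

Lemma has_index_uniq a n m : lin a -> has_index a n -> has_index a m -> n = m.
Proof.
move=> L [dk1 [dc1 [K1 [C1 ->]]]] [dk2 [dc2 [K2 [C2 ->]]]].
have -> : dk1 = dk2 by apply/eqP; rewrite eqn_leq (dim_ker_le K1 K2) (dim_ker_le K2 K1).
have -> : dc1 = dc2 by apply/eqP; rewrite eqn_leq (dim_coker_le L C1 C2) (dim_coker_le L C2 C1).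
by [].
Qed.

Definition zop : op K := fun _ => 0.

Definition endo (rho : op K -> op K) :=
  [/\ forall a, S1 a -> S1 (rho a),
      forall a b, S1 a -> S1 b -> rho (opadd a b) = opadd (rho a) (rho b),
      forall k a, S1 a -> rho (opscale k a) = opscale k (rho a),
      forall a b, S1 a -> S1 b -> rho (opmul a b) = opmul (rho a) (rho b) &
      rho (@opid K) = (@opid K)].

Lemma zopE : zop = opscale 0 (@opid K).
Proof. by apply: functional_extensionality => p; rewrite /zop /opscale scale0r. Qed.

Lemma S1_zop : S1 zop.
Proof. rewrite zopE; exact: S1_scal. Qed.

Lemma subopE a b : opsub a b = opadd a (opscale (-1) b).
Proof. by apply: functional_extensionality => p; rewrite /opsub /opadd /opscale scaleN1r. Qed.

Lemma scaleopE k a : opscale k a = opmul (opscale k (@opid K)) a.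
Proof. by []. Qed.

Lemma S1_scale k a : S1 a -> S1 (opscale k a).
Proof. by move=> H; rewrite scaleopE; apply: (S1_mul (S1_scal k) H). Qed.

Lemma S1_sub a b : S1 a -> S1 b -> S1 (opsub a b).
Proof. by move=> Ha Hb; rewrite subopE; apply: S1_add Ha (S1_scale _ Hb). Qed.

Definition E00 : op K := opsub (@opid K) (opmul (@Xop K) (@Yop K)).

Lemma S1_E00 : S1 E00.
Proof. exact: S1_sub S1_id (S1_mul (S1_X K) (S1_Y K)). Qed.

Lemma E00E r : E00 r = (r`_0)%:P.
Proof. by rewrite /E00 /opsub /opmul /opid /Xop {1}[r]Ydecomp addrC addKr. Qed.

Lemma EopD i j : Eop i j = opmul (Xpow i) (opmul E00 (Ypow j)).
Proof.
apply: functional_extensionality => p; rewrite EopE /opmul XpowE E00E coefYpow add0n.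
by rewrite mulrC mul_polyC.
Qed.

Lemma S1_Eop i j : S1 (@Eop K i j).
Proof. rewrite EopD; exact: (S1_mul (S1_Xpow _) (S1_mul S1_E00 (S1_Ypow _))). Qed.

Lemma YX : opmul (@Yop K) (@Xop K) = (@opid K).
Proof. apply: functional_extensionality => r; rewrite /opmul /Xop.
by rewrite -[Yop _]/(Ypow 1 ('X^(0 + 1) * r)) YpowXM expr0 mul1r. Qed.

Lemma E00X : opmul E00 (@Xop K) = zop.
Proof. apply: functional_extensionality => r; by rewrite /opmul E00E /Xop coefXM polyC0. Qed.

Lemma opid_notF : ~ inF' (@opid K).
Proof.
case=> N [_ H _]; have := H 1; rewrite /opid mulr1 => /eqP.
by rewrite expf_eq0 polyX_eq0 andbF.
Qed.

Lemma lift0 s : laurent_lift s 0 = zop.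
Proof. apply: functional_extensionality => r; rewrite /laurent_lift /opmul /zop mul0r.
exact: (lin0 (linYpow s)). Qed.

Lemma eqF_lift0 a s : eqF a (laurent_lift s 0) -> inF' a.
Proof. rewrite lift0 => H; apply: (inF'_ext H) => p; by rewrite /opsub /zop subr0. Qed.

Lemma killF e u v : S1 e -> S1 u -> S1 v -> opmul e u = zop -> opmul v u = (@opid K) -> inF' e.
Proof.
move=> Se Su Sv Eu Vu.
have [s1 [p1 H1]] := S1_symbol Se; have [s2 [p2 H2]] := S1_symbol Su.
have [s3 [p3 H3]] := S1_symbol Sv.
have Heu := eqF_trans (eqF_mul (S1_good Se) (good_lift _ _) H1 H2) (lift_mul s1 p1 s2 p2).
have Hvu := eqF_trans (eqF_mul (S1_good Sv) (good_lift _ _) H3 H2) (lift_mul s3 p3 s2 p2).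
rewrite Eu in Heu; rewrite Vu in Hvu.
have : p1 * p2 = 0.
  apply: (@lift_inF (s1 + s2)); apply: (eqF_inF Heu); exact: inF'_zero.
have p20 : p2 != 0.
  apply/eqP => p20; apply: opid_notF; apply: (@eqF_lift0 _ (s3 + s2)%N); by rewrite p20 mulr0 in Hvu.
move/eqP; rewrite mulf_eq0 (negPf p20) orbF => /eqP p10.
by apply: (@eqF_lift0 e s1); rewrite -p10.
Qed.

Lemma lift_eq s p t q : eqF (laurent_lift s p) (laurent_lift t q) -> 'X^t * p = 'X^s * q.
Proof. by rewrite /eqF lift_sub => /lift_inF /eqP; rewrite subr_eq0 => /eqP. Qed.

Lemma lift0_mulop P : laurent_lift 0 P = mulop P.
Proof. by []. Qed.

Lemma monomial_dvd p n : p %| 'X^n -> exists k (c : K), c != 0 /\ p = c *: 'X^k.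
Proof.
have -> : ('X^n : {poly K}) = ('X - 0%:P)^+n by rewrite polyC0 subr0.
case/dvdp_exp_XsubCP => k _; rewrite polyC0 subr0 => /eqpP [[c1 c2]] /= /andP [c10 c20] E.
exists k, (c2 / c1); split; first by rewrite mulf_neq0 // invr_eq0.
by rewrite mulrC -scalerA -E scalerA mulVf // scale1r.
Qed.

Lemma size_monomial (c : K) k : c != 0 -> size (c *: ('X^k : {poly K})) = k.+1.
Proof. by move=> c0; rewrite size_scale // size_polyXn. Qed.

Section Endo.
Variable rho : op K -> op K.
Hypothesis Hr : endo rho.

Lemma endo_S1 a : S1 a -> S1 (rho a).
Proof. by case: Hr => H _ _ _ _; apply: H. Qed.
Lemma endo_add a b : S1 a -> S1 b -> rho (opadd a b) = opadd (rho a) (rho b).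
Proof. by case: Hr => _ H _ _ _; apply: H. Qed.
Lemma endo_scale k a : S1 a -> rho (opscale k a) = opscale k (rho a).
Proof. by case: Hr => _ _ H _ _; apply: H. Qed.
Lemma endo_mul a b : S1 a -> S1 b -> rho (opmul a b) = opmul (rho a) (rho b).
Proof. by case: Hr => _ _ _ H _; apply: H. Qed.
Lemma endo_id : rho (@opid K) = @opid K.
Proof. by case: Hr. Qed.

Lemma endo_zop : rho zop = zop.
Proof. rewrite zopE endo_scale ?endo_id //; exact: S1_id. Qed.

Lemma endo_sub a b : S1 a -> S1 b -> rho (opsub a b) = opsub (rho a) (rho b).
Proof. by move=> Sa Sb; rewrite !subopE endo_add ?endo_scale //; apply: S1_scale. Qed.

Lemma endo_E00 : inF' (rho E00).
Proof.
apply: (@killF _ (rho (@Xop K)) (rho (@Yop K))).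
- exact: endo_S1 S1_E00.
- exact: endo_S1 (S1_X K).
- exact: endo_S1 (S1_Y K).
- by rewrite -endo_mul ?E00X ?endo_zop //; [exact: S1_E00 | exact: S1_X].
- by rewrite -endo_mul ?YX ?endo_id //; [exact: S1_Y | exact: S1_X].
Qed.

Lemma endo_Eop i j : inF' (rho (Eop i j)).
Proof.
rewrite EopD endo_mul; [|exact: S1_Xpow|exact: (S1_mul S1_E00 (S1_Ypow _))].
rewrite endo_mul; [|exact: S1_E00|exact: S1_Ypow].
apply: inF'_left; first exact/S1_good/endo_S1/S1_Xpow.
apply: inF'_right; first exact/S1_good/endo_S1/S1_Ypow.
exact: endo_E00.
Qed.

Lemma sum_closed (P : op K -> Prop) : P zop -> (forall a b, P a -> P b -> P (opadd a b)) ->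
  forall n (G : nat -> op K), (forall i, P (G i)) -> P (fun p => \sum_(i < n) G i p).
Proof.
move=> P0 PD; elim=> [|n IH] G HG.
  have -> : (fun p => \sum_(i < 0) G i p) = zop.
    by apply: functional_extensionality => p; rewrite big_ord0.
  exact: P0.
have -> : (fun p => \sum_(i < n.+1) G i p) = opadd (fun p => \sum_(i < n) G i p) (G n).
  by apply: functional_extensionality => p; rewrite big_ord_recr.
exact: PD (IH _ HG) (HG n).
Qed.

Lemma endo_F f : inF' f -> inF' (rho f).
Proof.
move=> /inF_equiv [n [c Hc]].
rewrite (functional_extensionality _ _ Hc).
pose P (a : op K) := S1 a /\ inF' (rho a).
have P0 : P zop by split; [exact: S1_zop | rewrite endo_zop; exact: inF'_zero].
have PD a b : P a -> P b -> P (opadd a b).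
  by case=> Sa Fa [Sb Fb]; split; [exact: S1_add | rewrite endo_add //; exact: inF'_add].
suff : P (fun p => \sum_(i < n) (fun i p => \sum_(j < n) c i j *: Eop i j p) i p) by case.
apply: (@sum_closed P P0 PD n (fun i p => \sum_(j < n) c i j *: Eop i j p)) => i.
apply: (@sum_closed P P0 PD n (fun j => opscale (c i j) (Eop i j))) => j.
split; first exact/S1_scale/S1_Eop.
rewrite endo_scale; [exact/inF'_scale/endo_Eop | exact: S1_Eop].
Qed.

Lemma endo_eqF a b : S1 a -> S1 b -> eqF a b -> eqF (rho a) (rho b).
Proof. by move=> Sa Sb H; rewrite /eqF -endo_sub //; apply: endo_F. Qed.


Lemma opid_lift : @opid K = laurent_lift 0 1.
Proof. by apply: functional_extensionality => q; rewrite /laurent_lift /opmul /= /opid mul1r. Qed.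

Lemma endo_YX : opmul (rho (@Yop K)) (rho (@Xop K)) = @opid K.
Proof. rewrite -endo_mul ?YX ?endo_id //; [exact: S1_Y|exact: S1_X]. Qed.

Lemma endo_sym : exists e (mu : K), mu != 0 /\ eqF (rho (@Xop K)) (mulop (mu *: 'X^e)) /\
  eqF (rho (@Yop K)) (laurent_lift e (mu^-1)%:P).
Proof.
have SX := endo_S1 (S1_X K); have SY := endo_S1 (S1_Y K).
have [s1 [p1 H1]] := S1_symbol SX; have [s2 [p2 H2]] := S1_symbol SY.
have H := eqF_trans (eqF_mul (S1_good SY) (good_lift _ _) H2 H1) (lift_mul s2 p2 s1 p1).
rewrite endo_YX opid_lift in H.
have E := lift_eq H; rewrite mulr1 expr0 mul1r in E.
have [k1 [c1 [c10 Ep1]]] : exists k (c : K), c != 0 /\ p1 = c *: 'X^k.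
  by apply: (@monomial_dvd _ (s2 + s1)); rewrite E dvdp_mull.
have [k2 [c2 [c20 Ep2]]] : exists k (c : K), c != 0 /\ p2 = c *: 'X^k.
  by apply: (@monomial_dvd _ (s2 + s1)); rewrite E dvdp_mulr.
rewrite Ep1 Ep2 -scalerAl -scalerAr scalerA -exprD in E.
have c210 : c2 * c1 != 0 by rewrite mulf_neq0.
have Ek : (s2 + s1 = k2 + k1)%N.
  by have := congr1 (fun P : {poly K} => size P) E; rewrite size_polyXn size_monomial // => -[].
have Ec : c2 * c1 = 1.
  have := congr1 (fun P : {poly K} => P`_(s2 + s1)) E; rewrite /= coefZ !coefXn eqxx Ek eqxx.
  by rewrite mulr1 => <-.
have c2E : c2 = c1^-1 by rewrite -[c2]mulr1 -(mulfV c10) mulrA Ec mul1r.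
case: (leqP s1 k1) => Hk.
- exists (k1 - s1)%N, c1; split => //; split.
    rewrite -lift0_mulop; apply: eqF_trans H1 _; apply: eqF_ext => q.
    by rewrite Ep1 -(lift_shift 0 s1) add0n -scalerAr -exprD addnC subnK.
  rewrite c2E in Ep2; apply: eqF_trans H2 _; apply: eqF_ext => q.
  have -> : s2 = (k1 - s1 + k2)%N.
    by apply/eqP; rewrite -(eqn_add2r s1) Ek addnAC subnK // addnC.
  by rewrite Ep2 -mul_polyC mulrC lift_shift.
- exfalso.
  have H1' : eqF (rho (@Xop K)) (laurent_lift (s1 - k1) c1%:P).
    apply: eqF_trans H1 _; apply: eqF_ext => q.
    by rewrite Ep1 -{1}(subnK (ltnW Hk)) -mul_polyC mulrC lift_shift.
  have cp : c1%:P != 0 by rewrite polyC_eq0.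
  have [dk [dc [[B [IB KB]] [_ Eind]]]] := index_lift (S1_good SX) H1' cp.
  rewrite /laurent_deg size_polyC c10 /= sub0r opprK in Eind.
  have dk0 : (0 < dk)%N.
    move: Eind; case: (dk) => // ; rewrite sub0r => /eqP; rewrite -addr_eq0 -PoszD eqz_nat addn_eq0.
    by rewrite subn_eq0 leqNgt Hk.
  pose j := Ordinal dk0.
  have K0 : rho (@Xop K) (B j) = 0 by apply/KB; exists (fun i => (i == j)%:R); apply: sum_delta.
  have B0 : B j != 0.
    apply/eqP => B0; have := IB (fun i => (i == j)%:R); rewrite -sum_delta => /(_ B0 j).
    by rewrite eqxx => /eqP; rewrite oner_eq0.
  have := congr1 (fun f => f (B j)) endo_YX; rewrite /opmul /opid K0.
  have [LY _ _] := S1_good SY; rewrite (lin0 LY) => E0.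
  by rewrite -E0 eqxx in B0.
Qed.


Lemma mulop_mul P Q : opmul (mulop P) (mulop Q) = mulop (P * Q).
Proof. by apply: functional_extensionality => q; rewrite /opmul /mulop mulrA. Qed.

Lemma mulop_decomp r c : mulop (r * 'X + c%:P) = opadd (opmul (mulop r) (@Xop K)) (opscale c (@opid K)).
Proof.
apply: functional_extensionality => p.
by rewrite /opadd /opmul /mulop /Xop /opscale /opid mulrDl mul_polyC -!mulrA.
Qed.

Lemma endo_mulop P r : eqF (rho (@Xop K)) (mulop P) -> eqF (rho (mulop r)) (mulop (r \Po P)).
Proof.
move=> HX; elim/poly_ind: r => [|r c IH].
  have -> : mulop 0 = zop by apply: functional_extensionality => q; rewrite /mulop mul0r.
  rewrite endo_zop comp_poly0.
  have -> : mulop 0 = zop by apply: functional_extensionality => q; rewrite /mulop mul0r.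
  exact: eqF_refl.
rewrite mulop_decomp endo_add; last first.
- exact: S1_scal.
- exact: (S1_mul (S1_mulop _) (S1_X K)).
rewrite endo_mul; [|exact: S1_mulop|exact: S1_X].
rewrite endo_scale ?endo_id; last exact: S1_id.
apply: eqF_trans (eqF_add (eqF_mul (S1_good (endo_S1 (S1_mulop r))) (good_mulop P) IH HX) (eqF_refl _)) _.
apply: eqF_ext => q.
by rewrite comp_poly_MXaddC /opadd /opmul /mulop /opscale /opid mulrDl mul_polyC mulrA.
Qed.

Lemma endo_Ypow e (c : K) t : eqF (rho (@Yop K)) (laurent_lift e c%:P) ->
  eqF (rho (Ypow t)) (laurent_lift (e * t) (c ^+ t)%:P).
Proof.
move=> HY; elim: t => [|t IH].
  by rewrite endo_id muln0 expr0 opid_lift; apply: eqF_refl.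
change (eqF (rho (opmul (@Yop K) (Ypow t))) (laurent_lift (e * t.+1) (c ^+ t.+1)%:P)).
rewrite endo_mul; [|exact: S1_Y|exact: S1_Ypow].
apply: eqF_trans (eqF_mul (S1_good (endo_S1 (S1_Y K))) (good_lift _ _) HY IH) _.
apply: eqF_trans (lift_mul _ _ _ _) _.
by rewrite -polyCM -exprS mulnS; apply: eqF_refl.
Qed.

Lemma endo_lift e (c : K) P t r : eqF (rho (@Xop K)) (mulop P) ->
  eqF (rho (@Yop K)) (laurent_lift e c%:P) ->
  eqF (rho (laurent_lift t r)) (laurent_lift (e * t) ((c ^+ t) *: (r \Po P))).
Proof.
move=> HX HY; rewrite /laurent_lift endo_mul; [|exact: S1_Ypow|exact: S1_mulop].
apply: eqF_trans (eqF_mul (S1_good (endo_S1 (S1_Ypow t))) (good_mulop _) (endo_Ypow t HY) (endo_mulop r HX)) _.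
rewrite -lift0_mulop; apply: eqF_trans (lift_mul _ _ _ _) _.
by rewrite addn0 mul_polyC; apply: eqF_refl.
Qed.

End Endo.

Lemma compXn Q e : ('X^e : {poly K}) \Po Q = Q ^+ e.
Proof.
elim: e => [|e IH]; first by rewrite !expr0 -polyC1 comp_polyC.
by rewrite !exprSr comp_polyM IH comp_polyX.
Qed.

Lemma endo_eq1 (sigma tau : op K -> op K) : endo sigma -> endo tau ->
  (forall a, S1 a -> tau (sigma a) = a) ->
  exists mu : K, mu != 0 /\ eqF (sigma (@Xop K)) (mulop (mu *: 'X)) /\
    eqF (sigma (@Yop K)) (laurent_lift 1 (mu^-1)%:P).
Proof.
move=> Es Et ts.
have [e [mu [mu0 [HX HY]]]] := endo_sym Es.
have [e' [nu [nu0 [HX' HY']]]] := endo_sym Et.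
have H := endo_eqF Et (endo_S1 Es (S1_X K)) (S1_mulop _) HX.
rewrite ts in H; last exact: S1_X.
have H2 := eqF_trans H (endo_mulop Et (mu *: 'X^e) HX').
have E := @lift_eq 0 'X 0 _ H2; rewrite expr0 !mul1r in E.
rewrite comp_polyZ compXn exprZn -exprM scalerA in E.
have : size ('X : {poly K}) = size ((mu * nu ^+ e) *: 'X^(e' * e)) by rewrite -E.
rewrite size_polyX size_monomial ?mulf_neq0 ?expf_neq0 // => -[] /eqP.
rewrite eq_sym add0n muln_eq1 => /andP [_ /eqP e1].
by exists mu; rewrite -{1}[mu *: 'X]/(mu *: 'X^1) -e1.
Qed.


Lemma aut_endo sigma : is_S1_aut sigma -> endo sigma.
Proof.
case=> Ss [_ [_ [Ad [Sc [Mu Id]]]]]; split => //.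
- by move=> a b Sa Sb; apply: functional_extensionality; apply: Ad.
- by move=> k a Sa; apply: functional_extensionality; apply: Sc.
- by move=> a b Sa Sb; apply: functional_extensionality; apply: Mu.
- by apply: functional_extensionality; apply: Id.
Qed.

Lemma part2 sigma a : is_S1_aut sigma -> S1 a -> ~ inF a ->
  forall n : int, has_index a n -> has_index (sigma a) n.
Proof.
move=> Hs Sa nFa n Hn.
have Es := aut_endo Hs.
case: Hs => Ss [Surj [Inj [Ad [Sc [Mu Id]]]]].
pose tau b := epsilon (inhabits (@opid K)) (fun a => S1 a /\ sigma a =1 b).
have tauP b : S1 b -> S1 (tau b) /\ sigma (tau b) =1 b.
  move=> Sb; apply: (epsilon_spec (inhabits (@opid K)) (fun a => S1 a /\ sigma a =1 b)).
  have [x [Sx Ex]] := Surj b Sb; by exists x.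
have tauS b : S1 b -> S1 (tau b) by move=> Sb; case: (tauP b Sb).
have tauE b : S1 b -> sigma (tau b) =1 b by move=> Sb; case: (tauP b Sb).
have ts x : S1 x -> tau (sigma x) = x.
  move=> Sx; apply: functional_extensionality; apply: Inj => //; first exact/tauS/Ss.
  exact/tauE/Ss.
have inj2 x y : S1 x -> S1 y -> sigma x =1 sigma y -> x = y.
  by move=> Sx Sy E; apply: functional_extensionality; apply: Inj.
have Et : endo tau.
  split.
  - exact: tauS.
  - move=> x y Sx Sy; apply: inj2; [exact/tauS/S1_add|exact: S1_add (tauS _ Sx) (tauS _ Sy)|].
    move=> p; rewrite (tauE _ (S1_add Sx Sy) p) (Ad _ _ (tauS _ Sx) (tauS _ Sy) p).
    by rewrite /opadd (tauE _ Sx p) (tauE _ Sy p).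
  - move=> k x Sx; apply: inj2; [exact/tauS/S1_scale|exact/S1_scale/tauS|].
    move=> p; rewrite (tauE _ (S1_scale k Sx) p) (Sc k _ (tauS _ Sx) p).
    by rewrite /opscale (tauE _ Sx p).
  - move=> x y Sx Sy; apply: inj2; [exact/tauS/S1_mul|exact: S1_mul (tauS _ Sx) (tauS _ Sy)|].
    move=> p; rewrite (tauE _ (S1_mul Sx Sy) p) (Mu _ _ (tauS _ Sx) (tauS _ Sy) p).
    by rewrite /opmul (tauE _ Sx) (tauE _ Sy p).
  - apply: inj2; [exact/tauS/S1_id|exact: S1_id|].
    by move=> p; rewrite (tauE _ S1_id p) (Id p).
have [mu [mu0 [HX HY]]] := endo_eq1 Es Et ts.
have nFa' : ~ inF' a by move=> /inF_equiv.
have [t [r Ha]] := S1_symbol Sa.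
have r0 : r != 0 by apply/eqP => r0; apply: nFa'; apply: (@eqF_lift0 a t); rewrite -r0.
have Hi := index_lift (S1_good Sa) Ha r0.
have [La _ _] := S1_good Sa.
rewrite (has_index_uniq La Hn Hi).
pose P := (mu^-1 ^+ t) *: (r \Po (mu *: 'X)).
have HsA : eqF (sigma a) (laurent_lift (1 * t) P).
  exact: eqF_trans (endo_eqF Es Sa (S1_lift t r) Ha) (endo_lift Es t r HX HY).
have sP : size P = size r.
  rewrite /P size_scale ?expf_neq0 ?invr_neq0 // size_comp_poly2 //.
  by rewrite size_scale // size_polyX.
have P0 : P != 0 by rewrite -size_poly_eq0 sP size_poly_eq0.
have := index_lift (S1_good (Ss _ Sa)) HsA P0.
by rewrite /laurent_deg mul1n sP.
Qed.

End Work.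

Unset Implicit Arguments.

Theorem lemma4p4 (K : fieldType) (charK : [pchar K] =i pred0) :
  (forall a : op K, S1 a -> ~ inF a ->
     (exists (s : nat) (p : {poly K}), inF (opsub a (laurent_lift s p))) /\
     (forall (s : nat) (p : {poly K}), inF (opsub a (laurent_lift s p)) ->
        has_index a (- laurent_deg s p))) /\
  (forall (sigma : op K -> op K) (a : op K), is_S1_aut sigma -> S1 a -> ~ inF a ->
     forall n : int, has_index a n -> has_index (sigma a) n).
Proof.
split.
- move=> a Sa nFa; split.
  + have [s [p H]] := S1_symbol Sa; exists s, p; exact/inF_equiv.
  + move=> s p /inF_equiv H; apply: (index_lift (S1_good Sa) H).
    apply/eqP => p0; apply: nFa; apply/inF_equiv; apply: (@eqF_lift0 _ a s).
    by rewrite -p0.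
- move=> sigma a Hs Sa nFa n Hn; exact: (part2 Hs Sa nFa Hn).
Qed.
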